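(* Let $0\to N\xrightarrow{i} G\xrightarrow{p} Q\to 1$ be a short exact sequence of groups with $N$ abelian (written additively; $G$ need not be abelian). Let $Aut^Q_N(G)$ be the group (under composition) of automorphisms $\alpha$ of $G$ with $\alpha(N)\subseteq N$ and $p\circ\alpha=p$, let $Aut^{N,Q}(G)$ be its subgroup of those $\alpha$ with $\alpha|_N=\mathrm{id}_N$, and let $Aut_Q(N)$ be the group of $Q$-module automorphisms of $N$. Then the sequence $$1\to Aut^{N,Q}(G)\xrightarrow{i'} Aut^Q_N(G)\xrightarrow{\rho'} Aut_Q(N)\xrightarrow{\eta} H^2(Q,N)$$ is exact, where $i'$ is the inclusion, $\rho'(\alpha)=\alpha|_N$, and $\eta$ is the restriction to $Aut_Q(N)$ of the transgression map $End_Q(N)\to H^2(Q,N)$ of the five-term exact sequence of the extension; here $i',\rho'$ are group homomorphisms and $\eta$ is a map of pointed sets (exactness at $Aut_Q(N)$ meaning $\mathrm{Im}\,\rho'=\eta^{-1}(0)$).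
   Context: $N$ is a $Q$-module via conjugation in $G$: for $\bar y=p(y)$, $\bar y\cdot n=y+n-y$. $H^2(Q,N)$ is group cohomology with this action. *)

(* Defs.v *)
From HB Require Import structures.
From mathcomp Require Import all_boot all_algebra.
From mathcomp Require Import monoid.

Set Implicit Arguments.
Unset Strict Implicit.
Unset Printing Implicit Defensive.

Section ExtensionDefs.
Variables (N : zmodType) (G Q : groupType) (i : N -> G) (p : G -> Q).

Definition short_exact : Prop :=
  [/\ (forall x y : N, i (x + y)%R = (i x * i y)%g),
      (forall g h : G, p (g * h)%g = (p g * p h)%g),
      injective i,
      (forall q : Q, exists g : G, p g = q)
    & (forall g : G, p g = 1%g <-> exists n : N, g = i n)].

Definition conj_action (act : Q -> N -> N) : Prop :=
  forall (y : G) (n : N), i (act (p y) n) = (y * i n * y^-1)%g.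

Definition group_aut (a : G -> G) : Prop :=
  bijective a /\ (forall x y : G, a (x * y)%g = (a x * a y)%g).

Definition AutQN (a : G -> G) : Prop :=
  [/\ group_aut a, (forall n : N, exists m : N, a (i n) = i m)
    & (forall g : G, p (a g) = p g)].

Definition AutNQ (a : G -> G) : Prop :=
  AutQN a /\ (forall n : N, a (i n) = i n).

Definition restricts_to (a : G -> G) (phi : N -> N) : Prop :=
  forall n : N, a (i n) = i (phi n).

Definition AutQmod (act : Q -> N -> N) (phi : N -> N) : Prop :=
  [/\ bijective phi, (forall x y : N, phi (x + y)%R = (phi x + phi y)%R)
    & (forall (q : Q) (n : N), phi (act q n) = act q (phi n))].

Definition section (s : Q -> G) : Prop := forall q : Q, p (s q) = q.

Definition factor_set (s : Q -> G) (f : Q -> Q -> N) : Prop :=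
  forall x y : Q, i (f x y) = (s x * s y * (s (x * y))^-1)%g.

End ExtensionDefs.

(* inhomogeneous 2-coboundaries: h = delta c, (delta c)(x,y) = x.c(y) - c(xy) + c(x);
   a 2-cocycle represents 0 in H^2(Q,N) iff it is a coboundary *)
Definition is_coboundary (N : zmodType) (Q : groupType) (act : Q -> N -> N)
  (h : Q -> Q -> N) : Prop :=
  exists c : Q -> N, forall x y : Q,
    h x y = (act x (c y) - c (x * y)%g + c x)%R.

(* eta(phi) = phi_*[f] - [f], represented by the cocycle (phi o f - f) *)
Definition eta_cocycle (N : zmodType) (Q : groupType) (f : Q -> Q -> N)
  (phi : N -> N) : Q -> Q -> N :=
  fun x y => (phi (f x y) - f x y)%R.

Definition eta_zero (N : zmodType) (Q : groupType) (act : Q -> N -> N)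
  (f : Q -> Q -> N) (phi : N -> N) : Prop :=
  is_coboundary act (eta_cocycle f phi).

(* Main.v *)
Require Import Defs.
From HB Require Import structures.
From mathcomp Require Import all_boot all_algebra.
From mathcomp Require Import monoid.

Set Implicit Arguments. Unset Strict Implicit.
Import GRing.Theory.

Lemma gA (G : groupType) (x y z : G) : (x * (y * z) = x * y * z)%g.
Proof. exact: mulgA. Qed.

Lemma ghom1 (G H : groupType) (h : G -> H) :
  (forall x y, h (x * y)%g = (h x * h y)%g) -> h 1%g = 1%g.
Proof.
move=> hM; apply: (@mulgI _ (h 1%g)); by rewrite -hM !mulg1.
Qed.

Lemma ghomV (G H : groupType) (h : G -> H) :
  (forall x y, h (x * y)%g = (h x * h y)%g) -> forall x, h (x^-1)%g = ((h x)^-1)%g.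
Proof.
move=> hM x; symmetry; apply: mulg1_eq; by rewrite -hM mulgV (ghom1 hM).
Qed.

Lemma zhom0 (N : zmodType) (G : groupType) (i : N -> G) :
  (forall x y : N, i (x + y)%R = (i x * i y)%g) -> i 0%R = 1%g.
Proof.
move=> iD; apply: (@mulgI _ (i 0%R)); by rewrite -iD addr0 mulg1.
Qed.

Theorem corollary2 (N : zmodType) (G Q : groupType) (i : N -> G) (p : G -> Q)
  (act : Q -> N -> N) (s : Q -> G) (f : Q -> Q -> N) :
  short_exact i p -> conj_action i p act -> section p s -> factor_set i s f ->
  [/\ (* i' : Aut^{N,Q}(G) -> Aut^Q_N(G) is the inclusion (injective) *)
      (forall a : G -> G, AutNQ i p a -> AutQN i p a),
      (* rho' is well defined: a|_N is a Q-module automorphism of N *)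
      (forall a : G -> G, AutQN i p a ->
         exists phi : N -> N, restricts_to i a phi /\ AutQmod act phi),
      (* rho' is a homomorphism *)
      (forall (a b : G -> G) (phi psi : N -> N),
         AutQN i p a -> AutQN i p b -> restricts_to i a phi ->
         restricts_to i b psi -> restricts_to i (a \o b) (phi \o psi)),
      (* exactness at Aut^Q_N(G): ker rho' = Im i' *)
      (forall a : G -> G, AutQN i p a ->
         (restricts_to i a id <-> AutNQ i p a))
    & (* exactness at Aut_Q(N): Im rho' = eta^{-1}(0) *)
      (forall phi : N -> N, AutQmod act phi ->
         ((exists a : G -> G, AutQN i p a /\ restricts_to i a phi)
          <-> eta_zero act f phi))].
Proof.
move=> [iD pM iinj psurj pker] Hact Hs Hf.
have pi1 : forall n, p (i n) = 1%g by move=> n; apply/pker; exists n.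
have actD : forall q u v, act q (u + v)%R = (act q u + act q v)%R.
  move=> q u v; have [y <-] := psurj q; apply: iinj.
  rewrite [RHS]iD !Hact iD.
  by rewrite !gA mulgVK.
have comm_s : forall x m, (s x * i m)%g = (i (act x m) * s x)%g.
  by move=> x m; have := Hact (s x) m; rewrite Hs => ->; rewrite mulgVK.
have sM : forall x y, (s x * s y)%g = (i (f x y) * s (x * y)%g)%g.
  by move=> x y; rewrite Hf mulgVK.
have prod : forall n m x y, (i n * s x * (i m * s y))%g =
    (i (n + act x m + f x y)%R * s (x * y)%g)%g.
  move=> n m x y; rewrite !iD -!gA; congr (_ * _)%g.
  by rewrite gA comm_s -gA sM gA.
have dec_ex : forall g : G, exists n : N, i n == (g * (s (p g))^-1)%g.
  move=> g; have [n Hn] : exists n, (g * (s (p g))^-1)%g = i n.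
    by apply/pker; rewrite pM (ghomV pM) Hs mulgV.
  by exists n; rewrite Hn.
pose dec g := xchoose (dec_ex g).
have decP : forall g, (i (dec g) * s (p g))%g = g.
  by move=> g; rewrite (eqP (xchooseP (dec_ex g))) mulgVK.
have pis : forall n q, p (i n * s q)%g = q by move=> n q; rewrite pM pi1 Hs mul1g.
have decE : forall n q, dec (i n * s q)%g = n.
  move=> n q; apply: iinj; apply: (@mulIg _ (s q)).
  by rewrite -{2}(pis n q) decP.
split.
- by move=> a [].
- move=> a [[[ainv aK Ka] aM] aN ap].
  have phi_ex : forall n, exists m, a (i n) == i m.
    by move=> n; have [m Hm] := aN n; exists m; rewrite Hm.
  pose phi n := xchoose (phi_ex n).
  have phiP : forall n, a (i n) = i (phi n) by move=> n; exact/eqP/(xchooseP (phi_ex n)).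
  have psi_ex : forall m, exists n, ainv (i m) == i n.
    move=> m; have [n Hn] : exists n, ainv (i m) = i n.
      by apply/pker; rewrite -ap Ka pi1.
    by exists n; rewrite Hn.
  pose psi m := xchoose (psi_ex m).
  have psiP : forall m, ainv (i m) = i (psi m) by move=> m; exact/eqP/(xchooseP (psi_ex m)).
  exists phi; split => //; split.
  + exists psi => n; apply: iinj.
    * by rewrite -psiP -phiP aK.
    * by rewrite -phiP -psiP Ka.
  + by move=> x y; apply: iinj; rewrite -phiP !iD aM !phiP.
  + move=> q n; have [y <-] := psurj q; apply: iinj.
    by rewrite -phiP Hact !aM (ghomV aM) phiP -ap -Hact.
- move=> a b phi psi _ _ Ha Hb n /=; by rewrite Hb Ha.
- move=> a Ha; split.
  + by move=> H; split => // n; rewrite H.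
  + by move=> [_ H] n; rewrite H.
move=> phi [[phiV phiK Kphi] phiD phiact].
have phiN : forall u v, phi (u - v)%R = (phi u - phi v)%R.
  move=> u v; apply/eqP; rewrite eq_sym subr_eq -phiD subrK //.
have actN : forall q u v, act q (u - v)%R = (act q u - act q v)%R.
  move=> q u v; apply/eqP; rewrite eq_sym subr_eq -actD subrK //.
have act1 : forall n, act 1%g n = n.
  move=> n; apply: iinj; rewrite -(ghom1 pM) Hact.
  by rewrite invg1 mulg1 mul1g.
split.
- move=> [a [[[[ainv aK Ka] aM] aN ap] Ha]].
  have c_ex : forall q, exists n, i n == (a (s q) * (s q)^-1)%g.
    move=> q; have [n Hn] : exists n, (a (s q) * (s q)^-1)%g = i n.
      by apply/pker; rewrite pM (ghomV pM) ap Hs mulgV.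
    by exists n; rewrite Hn.
  pose c q := xchoose (c_ex q).
  have cP : forall q, a (s q) = (i (c q) * s q)%g.
    by move=> q; rewrite (eqP (xchooseP (c_ex q))) mulgVK.
  exists c => x y.
  have := f_equal a (sM x y).
  rewrite !aM !cP Ha prod gA -iD.
  move/mulIg/iinj => E.
  rewrite /eta_cocycle -[phi _](addrK (c (x * y)%g)) -E.
  rewrite addrAC addrK [(c x + _)%R]addrC -!addrA; congr (_ + _)%R.
  by rewrite addrC.
- move=> [c Hc].
  have Hc' : forall x y, phi (f x y) = (act x (c y) - c (x * y)%g + c x + f x y)%R.
    by move=> x y; rewrite -Hc /eta_cocycle subrK.
  pose a g := (i (phi (dec g) + c (p g))%R * s (p g))%g.
  have aE : forall n q, a (i n * s q)%g = (i (phi n + c q)%R * s q)%g.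
    by move=> n q; rewrite /a decE pis.
  pose b g := (i (phiV (dec g - c (p g)))%R * s (p g))%g.
  have s1 : s 1%g = i (f 1%g 1%g).
    by rewrite Hf mulg1 mulgK.
  have f11 : phi (f 1%g 1%g) = (c 1%g + f 1%g 1%g)%R.
    by rewrite Hc' act1 mulg1 subrK.
  have aN : forall n, a (i n) = i (phi n).
    move=> n.
    have -> : i n = (i (n - f 1%g 1%g)%R * s 1%g)%g by rewrite s1 -iD subrK.
    by rewrite aE phiN f11 opprD addrA s1 -iD (addrAC _ (- _)%R) !subrK.
  exists a; split; first split.
  + split.
    * exists b => g.
      -- by rewrite /b {1}/a decE pis addrK phiK decP.
      -- by rewrite /b aE Kphi subrK decP.
    * move=> g h; rewrite -(decP g) -(decP h) prod !aE prod; congr (i _ * _)%g.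
      rewrite !phiD phiact Hc' actD.
      set A := phi (dec g); set B := act (p g) (phi (dec h)).
      set C := c (p g); set D := act (p g) (c (p h)); set E := c (p g * p h)%g.
      set F := f (p g) (p h).
      rewrite -!addrA (addrC F E) (addrCA C E F) addKr.
      rewrite (addrCA C B) (addrCA C D F) //.
  + by move=> n; exists (phi n); exact: aN.
  + by move=> g; rewrite /a pis.
  + exact: aN.
Qed.
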